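(* For every $T_1,T_2\in\mathcal{T}_n$, if $M(T_1)=M(T_2)$, then $T_1=T_2$ (i.e., they are label-preservingly isomorphic).
   Context: A phylogenetic tree is a finite rooted tree (arcs directed away from the root) with no node of outdegree $1$, whose leaves are injectively labeled. $\mathcal{T}_n$ denotes the set of phylogenetic trees with $n$ leaves labeled $1,\dots,n$, up to label-preserving isomorphism. Internal nodes are the non-leaf nodes; $\mathcal{L}(T)$ is the set of leaves. The height of a node is the length of a longest directed path from it to a leaf. The bottom-up ordering of $T=(V,E)\in\mathcal{T}_n$ is the unique injective map $\ell:V\to\{1,\dots,|V|\}$ such that: (a) for a leaf $v$, $\ell(v)$ is its label; (b) if $\mathrm{height}(u)<\mathrm{height}(v)$ then $\ell(u)<\ell(v)$; (c) if $0<\mathrm{height}(u)=\mathrm{height}(v)$ and $\min\{\ell(x): x \text{ child of } u\}<\min\{\ell(x): x\text{ child of } v\}$ then $\ell(u)<\ell(v)$. The matching representation of $T$ is $M(T)=\{\ell(\mathrm{children}(u)) : u\in V\setminus\mathcal{L}(T)\}$, a partition of $\{1,\dots,|V|-1\}$. *)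

(* Defs.v *)
From mathcomp Require Import all_boot.
From mathcomp Require Import finmap.
Set Implicit Arguments. Unset Strict Implicit. Unset Printing Implicit Defensive.
Local Open Scope fset_scope.

(* Nodes form a finite type [pt_V];
   [pt_child u v] means there is an arc u -> v (v is a child of u);
   leaf label i+1 (for i : 'I_n) is carried by the node [pt_leaf i]. *)
Record phylo_tree (n : nat) := PhyloTree {
  pt_V :> finType;
  pt_child : rel pt_V;
  pt_root : pt_V;
  pt_leaf : 'I_n -> pt_V;
  pt_root_noparent : forall u, ~~ pt_child u pt_root;
  pt_parent_unique : forall v, v != pt_root -> exists! u, pt_child u v;
  pt_reach : forall v, connect pt_child pt_root v;
  pt_no_outdeg1 : forall u, #|[set v | pt_child u v]| != 1;
  pt_leaf_inj : injective pt_leaf;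
  pt_leaf_leaf : forall i v, ~~ pt_child (pt_leaf i) v;
  pt_leaf_onto : forall u, (forall v, ~~ pt_child u v) -> exists i, u = pt_leaf i
}.

Section Defs.
Variables (n : nat) (T : phylo_tree n).

Definition is_leaf (u : T) : bool := [forall v, ~~ @pt_child n T u v].
Definition is_internal (u : T) : bool := ~~ is_leaf u.

Definition is_height (u : T) (k : nat) : Prop :=
  (exists p : seq T, [/\ path (@pt_child n T) u p, is_leaf (last u p) & size p = k]) /\
  (forall p : seq T, path (@pt_child n T) u p -> is_leaf (last u p) -> size p <= k).

(* min{l x : x child of u} < min{l x : x child of v}, written out *)
Definition min_child_lt (l : T -> nat) (u v : T) : Prop :=
  exists2 c, @pt_child n T u c & forall d, @pt_child n T v d -> l c < l d.

Definition bottom_up (l : T -> nat) : Prop :=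
  [/\ injective l,
      (forall v, 1 <= l v <= #|T|),
      (forall i : 'I_n, l (pt_leaf T i) = i.+1),
      (forall u v hu hv, is_height u hu -> is_height v hv -> hu < hv -> l u < l v)
    & (forall u v h, is_height u h -> is_height v h -> 0 < h ->
         min_child_lt l u v -> l u < l v)].

Definition matching (l : T -> nat) : {fset {fset nat}} :=
  [fset [fset l x | x in [pred x | @pt_child n T u x]] | u in [pred u | is_internal u]].

End Defs.

Definition phylo_iso n (T1 T2 : phylo_tree n) : Prop :=
  exists f : T1 -> T2,
    [/\ bijective f,
        (forall u v, @pt_child n T2 (f u) (f v) = @pt_child n T1 u v)
      & (forall i, f (pt_leaf T1 i) = pt_leaf T2 i)].

(* Main.v *)
Require Import Defs.
From mathcomp Require Import all_boot finmap.
Set Implicit Arguments. Unset Strict Implicit. Unset Printing Implicit Defensive.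
Local Open Scope fset_scope.

Section Tree.
Variables (n : nat) (T : phylo_tree n).
Notation ch := (@pt_child n T).

Definition cyc (v : T) := exists q, path ch v (rcons q v).


Lemma no_parent_root v w : ch w v -> v != pt_root T.
Proof. by move=> h; apply/eqP => e; move: (pt_root_noparent w); rewrite -e h. Qed.

Lemma parent_uniq v w1 w2 : ch w1 v -> ch w2 v -> w1 = w2.
Proof.
move=> h1 h2; have [u [_ hu]] := pt_parent_unique (no_parent_root h1).
by rewrite -(hu _ h1) (hu _ h2).
Qed.

Lemma cyc_parent v w : cyc v -> ch w v -> cyc w.
Proof.
move=> [q]; rewrite rcons_path => /andP[pq ev] ew.
have e := parent_uniq ev ew; subst w.
by exists (belast v q); rewrite -lastI /= pq ev.
Qed.

Lemma no_cyc v : ~ cyc v.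
Proof.
have [q pq ->] := connectP (pt_reach v).
elim/last_ind: q pq => [|q x IH] /=.
  move=> _ [c]; rewrite rcons_path => /andP[_ h].
  by move: (pt_root_noparent (last (pt_root T) c)); rewrite h.
rewrite rcons_path last_rcons => /andP[pq e] cx.
exact: IH pq (cyc_parent cx e).
Qed.

Lemma path_uniq u p : path ch u p -> uniq (u :: p).
Proof.
elim: p u => [|x p IH] u //= /andP[e pp].
have /= -> := IH _ pp; rewrite andbT.
apply/negP => /orP[/eqP ex | up].
  by subst x; apply: (@no_cyc u); exists [::]; rewrite /= e.
case/splitPr: up pp => p1 p2.
rewrite cat_path => /andP[pp1 /= /andP[e2 _]].
apply: (@no_cyc u); exists (x :: p1); rewrite /= e.
by rewrite rcons_path pp1 /=.
Qed.

Lemma path_size u p : path ch u p -> size p < #|T|.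
Proof.
move/path_uniq/card_uniqP => h.
have := max_card (mem (u :: p)); rewrite h /=.
done.
Qed.

Definition H (u : T) : nat :=
  \max_(k < #|T| | [exists t : k.-tuple T, path ch u t]) k.

Lemma H_ex u : exists2 p, path ch u p & size p = H u.
Proof.
have u0 : 0 < #|T| by apply/card_gt0P; exists u.
have c0 : 0 < #|[pred k : 'I_#|T| | [exists t : k.-tuple T, path ch u t]]|.
  apply/card_gt0P; exists (Ordinal u0); rewrite inE /=.
  by apply/existsP; exists [tuple].
have [k] := @eq_bigmax_cond _ _ (fun k : 'I_#|T| => nat_of_ord k) c0.
rewrite inE => /existsP[t pt] e; exists t => //.
by rewrite size_tuple /H e.
Qed.

Lemma H_max u p : path ch u p -> size p <= H u.
Proof.
move=> pp; have hs := path_size pp.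
rewrite /H; apply: (@leq_bigmax_cond _ _ (fun k : 'I_#|T| => nat_of_ord k) (Ordinal hs)).
by apply/existsP; exists (in_tuple p).
Qed.

Lemma leafP (u : T) : reflect (forall v, ~~ ch u v) (is_leaf u).
Proof. exact: forallP. Qed.

Lemma internalP (u : T) : reflect (exists v, ch u v) (is_internal u).
Proof.
apply: (iffP forallPn) => -[v hv]; exists v; first by rewrite negbK in hv.
by rewrite negbK.
Qed.

Lemma H_spec (u : T) : is_height u (H u).
Proof.
split; last by move=> p pp _; apply: H_max.
have [p pp sp] := H_ex u; exists p; split => //.
apply/leafP => v; apply/negP => e.
have := @H_max u (rcons p v); rewrite rcons_path pp e size_rcons sp ltnn.
by move/(_ isT).
Qed.

Lemma height_uniq (u : T) a b : is_height u a -> is_height u b -> a = b.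
Proof.
move=> [[p [pp lp sp]] ha] [[q [pq lq sq]] hb].
have h1 := hb p pp lp; have h2 := ha q pq lq.
by apply/eqP; rewrite eqn_leq -{1}sp h1 -sq h2.
Qed.

Lemma H_leaf (u : T) : is_leaf u -> H u = 0.
Proof.
move=> lu; apply: height_uniq (H_spec u) _; split.
  by exists [::].
case=> [|x p] //= /andP[e _]; by move/leafP: lu => /(_ x); rewrite e.
Qed.

Lemma H_child (u c : T) : ch u c -> H c < H u.
Proof.
move=> e; have [[p [pp lp sp]] _] := H_spec c.
have [_ hu] := H_spec u.
by have := hu (c :: p); rewrite /= e pp sp; apply.
Qed.

Lemma H_internal (u : T) : is_internal u -> exists2 c, ch u c & H u = (H c).+1.
Proof.
move=> iu; have [[p [pp lp sp]] _] := H_spec u.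
case: p pp lp sp => [|c p] /=.
  by move=> _ lu; move: iu; rewrite /is_internal lu.
move=> /andP[e pp] lp sp; exists c => //.
apply/eqP; rewrite eqn_leq H_child // andbT -sp ltnS.
by have [_ hc] := H_spec c; apply: hc.
Qed.

Lemma H_internal_pos (u : T) : is_internal u -> 0 < H u.
Proof. by case/H_internal => c _ ->. Qed.

End Tree.

Section Lab.
Variables (n : nat) (T : phylo_tree n) (l : T -> nat) (bu : bottom_up l).
Notation ch := (@pt_child n T).

Definition chset (u : T) := [fset l x | x in [pred x | ch u x]].

Lemma l_inj : injective l. Proof. by case: bu. Qed.

Lemma l_hgt (u v : T) : H u < H v -> l u < l v.
Proof. by case: bu => _ _ _ h _; apply: (h u v (H u) (H v) (H_spec u) (H_spec v)). Qed.

Lemma l_tie (u v : T) : H u = H v -> 0 < H u -> min_child_lt l u v -> l u < l v.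
Proof. by case: bu => _ _ _ _ h e; apply: (h u v (H u) (H_spec u)); rewrite e; apply: H_spec. Qed.

Lemma l_child (u c : T) : ch u c -> l c < l u.
Proof. by move/H_child; apply: l_hgt. Qed.

Lemma l_range (u : T) : 0 < l u <= #|T|.
Proof. by case: bu. Qed.

Lemma l_leaf i : l (pt_leaf T i) = i.+1.
Proof. by case: bu. Qed.

Lemma l_surj k : 0 < k <= #|T| -> exists x, l x = k.
Proof.
move=> hk.
have u1 : uniq (map l (enum T)) by rewrite map_inj_uniq ?enum_uniq //; apply: l_inj.
have sub : {subset map l (enum T) <= iota 1 #|T|}.
  move=> j /mapP[x _ ->]; rewrite mem_iota add1n ltnS; exact: l_range.
have [|_ e] := uniq_min_size u1 sub.
  by rewrite size_iota size_map -cardE.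
have : k \in iota 1 #|T| by rewrite mem_iota add1n ltnS.
by rewrite -e => /mapP[x _ ->]; exists x.
Qed.

Lemma leaf_lab (u : T) : is_leaf u = (l u <= n).
Proof.
apply/idP/idP.
  move/leafP/pt_leaf_onto => [i ->]; by rewrite l_leaf.
move=> hu; have /andP[h0 _] := l_range u.
have hi : (l u).-1 < n by rewrite prednK.
have e : l (pt_leaf T (Ordinal hi)) = l u by rewrite l_leaf /= prednK.
rewrite -(l_inj e); apply/leafP => v; exact: pt_leaf_leaf.
Qed.

Lemma memc u j : reflect (exists2 x, ch u x & j = l x) (j \in chset u).
Proof. by apply: (iffP (imfsetP _ _ _ _)) => -[x hx ->]; exists x. Qed.

Lemma memc_l (u x : T) : (l x \in chset u) = ch u x.
Proof.
apply/memc/idP => [[y hy /l_inj ->]|h] //; by exists x.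
Qed.

Lemma memM B : B \in matching l -> exists2 u, is_internal u & B = chset u.
Proof. by move/imfsetP => [u hu ->]; exists u. Qed.

Lemma memM2 u : is_internal u -> chset u \in matching l.
Proof. by move=> hu; apply/imfsetP; exists u. Qed.

Lemma chset_disj u v j : j \in chset u -> j \in chset v -> u = v.
Proof.
move=> /memc[x hx ->]; rewrite memc_l => hv; exact: parent_uniq hx hv.
Qed.

Lemma chset_internal u : is_internal u -> exists j, j \in chset u.
Proof. by move/internalP => [v hv]; exists (l v); rewrite memc_l. Qed.

Lemma chset_leaf u : is_leaf u -> chset u = fset0.
Proof.
move/leafP => h; apply/fsetP => j; rewrite inE; apply/memc => -[x hx _].
by move: (h x); rewrite hx.
Qed.

End Lab.

Lemma internal_lab n (T : phylo_tree n) (l : T -> nat) (bu : bottom_up l) (u : T) :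
  is_internal u = (n < l u).
Proof. by rewrite /is_internal (leaf_lab bu) ltnNge. Qed.

Definition agree n (T1 T2 : phylo_tree n) (l1 : T1 -> nat) (l2 : T2 -> nat) k :=
  forall (y1 : T1) (y2 : T2), l1 y1 < k -> l1 y1 = l2 y2 ->
    chset l1 y1 = chset l2 y2 /\ H y1 = H y2.

Lemma agree_sym n (T1 T2 : phylo_tree n) (l1 : T1 -> nat) (l2 : T2 -> nat) k :
  agree l1 l2 k -> agree l2 l1 k.
Proof.
move=> h y2 y1 lt e; have [] := h y1 y2 (ltac:(by rewrite -e)) (esym e).
by move=> -> ->.
Qed.

Section Two.
Variables (n : nat) (T1 T2 : phylo_tree n) (l1 : T1 -> nat) (l2 : T2 -> nat).
Variables (bu1 : bottom_up l1) (bu2 : bottom_up l2).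

Lemma height_le k (IH : agree l1 l2 k) (x1 : T1) (x2 : T2) :
  is_internal x1 -> (forall c, pt_child x1 c -> l1 c < k) ->
  chset l1 x1 = chset l2 x2 -> H x1 <= H x2.
Proof.
move=> ix1 hk e; have [c1 hc1 ->] := H_internal ix1.
have : l1 c1 \in chset l2 x2 by rewrite -e (memc_l bu1).
case/(memc l2) => c2 hc2 e2.
have [_ ->] := IH c1 c2 (hk _ hc1) e2.
exact: H_child.
Qed.

Lemma later k (IH : agree l1 l2 k) (x1 : T1) (w2 : T2) :
  is_internal x1 -> l1 x1 = k -> chset l2 w2 = chset l1 x1 -> l2 w2 != k -> k < l2 w2.
Proof.
move=> ix1 ek e ne; rewrite ltn_neqAle eq_sym ne /=; rewrite leqNgt; apply/negP => lt.
have /andP[r0 _] := l_range bu2 w2.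
have /andP[_ r1] := l_range bu1 x1.
have [|w1 ew1] := @l_surj _ _ _ bu1 (l2 w2).
  by rewrite r0 /= (leq_trans (ltnW lt)) // -ek.
have [e1 _] := IH w1 w2 (ltac:(by rewrite ew1)) ew1.
have [j hj] := chset_internal bu1 ix1.
have : j \in chset l1 w1 by rewrite e1 e.
move/(chset_disj bu1 hj) => ex; subst w1.
by move: ne; rewrite -ew1 ek eqxx.
Qed.


Lemma child_bound k (x1 : T1) (x2 : T2) :
  (forall c, pt_child x1 c -> l1 c < k) -> chset l1 x1 = chset l2 x2 ->
  forall c, pt_child x2 c -> l2 c < k.
Proof.
move=> h e c hc; have : l2 c \in chset l1 x1 by rewrite e (memc_l bu2).
by case/(memc l1) => c1 hc1 ->; apply: h.
Qed.

Lemma exists_match (hM : matching l1 = matching l2) (hA : forall k, agree l1 l2 k)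
  (x1 : T1) : exists x2 : T2, l2 x2 = l1 x1.
Proof.
case: (boolP (is_leaf x1)) => lx1.
  move/leafP/pt_leaf_onto: lx1 => [i ->]; exists (pt_leaf T2 i).
  by rewrite (l_leaf bu1) (l_leaf bu2).
have : chset l1 x1 \in matching l2 by rewrite -hM; apply: memM2.
case/memM => w2 iw2 ew2.
case: (ltngtP (l2 w2) (l1 x1)) => [lt|gt|eq]; last by exists w2.
  have := @later (l1 x1) (hA _) x1 w2 lx1 erefl (esym ew2).
  by rewrite ltn_eqF // ltnNge ltnW //; move/(_ isT).
have /andP[r0 _] := l_range bu1 x1.
have /andP[_ r1] := l_range bu2 w2.
apply: (l_surj bu2); rewrite r0 /=; exact: leq_trans (ltnW gt) r1.
Qed.

End Two.

Lemma sep (B1 B2 : {fset nat}) j : j \in B1 ->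
  (forall x, x \in B1 -> x \in B2 -> False) ->
  (exists2 a, a \in B1 & forall b, b \in B2 -> a < b) \/
  (exists2 b, b \in B2 & forall a, a \in B1 -> b < a).
Proof.
move=> hj disj.
have ex : exists m, (m \in B1) || (m \in B2) by exists j; rewrite hj.
case: (ex_minnP ex) => m hm hmin.
case/orP: hm => hm; [left|right]; exists m => // b hb;
  rewrite ltn_neqAle hmin ?hb ?orbT // andbT; apply/eqP => e; subst b.
  exact: disj hm hb.
exact: disj hb hm.
Qed.

Section Main.
Variables (n : nat) (T1 T2 : phylo_tree n) (l1 : T1 -> nat) (l2 : T2 -> nat).
Variables (bu1 : bottom_up l1) (bu2 : bottom_up l2) (hM : matching l1 = matching l2).

Lemma step k : agree l1 l2 k -> agree l1 l2 k.+1.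
Proof.
move=> IH y1 y2; rewrite ltnS leq_eqVlt => /orP[/eqP ek | lt] e; last exact: IH.
have ek2 : l2 y2 = k by rewrite -e.
case: (boolP (is_leaf y1)) => ly1.
  have ly2 : is_leaf y2 by rewrite (leaf_lab bu2) -e -(leaf_lab bu1).
  by rewrite !chset_leaf // !H_leaf.
have iy1 : is_internal y1 := ly1.
have iy2 : is_internal y2 by rewrite (internal_lab bu2) -e -(internal_lab bu1).
have hk1 : forall c, pt_child y1 c -> l1 c < k by move=> c /(l_child bu1); rewrite ek.
suff ec : chset l1 y1 = chset l2 y2.
  split=> //; apply/eqP; rewrite eqn_leq (height_le bu1 IH) //.
  have hb2 := child_bound bu2 hk1 ec.
  by rewrite (height_le bu2 (agree_sym IH)).
case: (chset l1 y1 =P chset l2 y2) => // ne; exfalso.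
have : chset l1 y1 \in matching l2 by rewrite -hM; apply: memM2.
case/memM => w2 iw2 ew2.
have : chset l2 y2 \in matching l1 by rewrite hM; apply: memM2.
case/memM => w1 iw1 ew1.
have kw2 : k < l2 w2.
  apply: (later bu1 bu2 IH iy1 ek (esym ew2)); apply/eqP => e2.
  by apply: ne; rewrite ew2; congr chset; apply: (l_inj bu2); rewrite e2 ek2.
have kw1 : k < l1 w1.
  apply: (later bu2 bu1 (agree_sym IH) iy2 ek2 (esym ew1)); apply/eqP => e2.
  by apply: ne; rewrite ew1; congr chset; apply: (l_inj bu1); rewrite e2 ek.
have hk2 : forall c, pt_child y2 c -> l2 c < k by move=> c /(l_child bu2); rewrite ek2.
have hw2 := child_bound bu2 hk1 ew2.
have hw1 := child_bound bu1 hk2 ew1.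
have Hyw2 : H y1 = H w2.
  apply/eqP; rewrite eqn_leq (height_le bu1 IH) //.
  by rewrite (height_le bu2 (agree_sym IH)).
have Hyw1 : H y2 = H w1.
  apply/eqP; rewrite eqn_leq (height_le bu2 (agree_sym IH)) //.
  by rewrite (height_le bu1 IH).
have c2 : ~ (H w2 < H y2).
  by move/(l_hgt bu2); rewrite ek2 ltnNge ltnW.
have c1 : ~ (H w1 < H y1).
  by move/(l_hgt bu1); rewrite ek ltnNge ltnW.
have eH : H w2 = H y2.
  have a : H y2 <= H w2 by rewrite leqNgt; apply/negP.
  have b : H y1 <= H w1 by rewrite leqNgt; apply/negP.
  by apply/eqP; rewrite eqn_leq a -Hyw2 Hyw1 b.
have [j hj] := chset_internal bu1 iy1.
have disj : forall x, x \in chset l1 y1 -> x \in chset l2 y2 -> False.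
  move=> x hx; rewrite ew1 => /(chset_disj bu1 hx) ex; subst w1.
  by move: kw1; rewrite ek ltnn.
case: (sep hj disj) => [[a ha hlt]|[b hb hlt]].
  have : l2 w2 < l2 y2.
    apply: (l_tie bu2 eH); first by rewrite -Hyw2; exact: H_internal_pos.
    move: ha; rewrite ew2 => /memc[c hc ea]; exists c => // d hd.
    by rewrite -ea; apply: hlt; rewrite (memc_l bu2).
  by rewrite ek2 ltnNge ltnW.
have : l1 w1 < l1 y1.
  apply: (l_tie bu1).
  - by rewrite -Hyw1 -eH.
  - by rewrite -Hyw1; exact: H_internal_pos.
  move: hb; rewrite ew1 => /memc[c hc ea]; exists c => // d hd.
  by rewrite -ea; apply: hlt; rewrite (memc_l bu1).
by rewrite ek ltnNge ltnW.
Qed.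

Lemma agree_all k : agree l1 l2 k.
Proof. by elim: k => [|k IH]; [move=> y1 y2| apply: step]. Qed.

End Main.

Theorem corollary2 (n : nat) (T1 T2 : phylo_tree n)
    (l1 : T1 -> nat) (l2 : T2 -> nat) :
  bottom_up l1 -> bottom_up l2 ->
  matching l1 = matching l2 ->
  phylo_iso T1 T2.
Proof.
move=> bu1 bu2 hM.
have A := agree_all bu1 bu2 hM.
have A' : forall k, agree l2 l1 k := fun k => agree_sym (A k).
have E1 := exists_match bu1 bu2 hM A.
have E2 := exists_match bu2 bu1 (esym hM) A'.
pose f x1 := odflt (pt_root T2) [pick x2 | l2 x2 == l1 x1].
pose g x2 := odflt (pt_root T1) [pick x1 | l1 x1 == l2 x2].
have hf x1 : l2 (f x1) = l1 x1.
  rewrite /f; case: pickP => [x /eqP //|h].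
  by have [x2 e] := E1 x1; move: (h x2); rewrite e eqxx.
have hg x2 : l1 (g x2) = l2 x2.
  rewrite /g; case: pickP => [x /eqP //|h].
  by have [x1 e] := E2 x2; move: (h x1); rewrite e eqxx.
exists f; split.
- exists g => x.
    by apply: (l_inj bu1); rewrite hg hf.
  by apply: (l_inj bu2); rewrite hf hg.
- move=> u v.
  have [ec _] := A (l1 u).+1 u (f u) (ltnSn _) (esym (hf u)).
  by rewrite -(memc_l bu2) -(memc_l bu1) -ec hf.
- by move=> i; apply: (l_inj bu2); rewrite hf (l_leaf bu1) (l_leaf bu2).
Qed.
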